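(* Let $F=F(N,\mathcal D)$ be a connected GSC and let $i\in\mathcal D$. If there is exactly one word $\mathbf w\in\mathcal D^2$ such that the level-3 cell $\varphi_{i\mathbf w}(F)$ intersects $\bigcup_{j\in\mathcal D\setminus\{i\}}\varphi_j(F)$, then $F$ is fragile.
   Context: GSC: $N\ge2$, $\mathcal D\subset\{0,\dots,N-1\}^2$ with $1<|\mathcal D|<N^2$, $\varphi_i(x)=\frac1N(x+i)$, $F$ the attractor $F=\bigcup_{i\in\mathcal D}\varphi_i(F)$; $\varphi_{i_1\cdots i_k}=\varphi_{i_1}\circ\cdots\circ\varphi_{i_k}$; a level-$k$ cell is a set $\varphi_{\mathbf i}(F)$ with $\mathbf i\in\mathcal D^k$. $F$ is fragile if there is a partition $\mathcal D=\mathcal D_1\cup\mathcal D_2$ into disjoint nonempty sets with $\big(\bigcup_{i\in\mathcal D_1}\varphi_i(F)\big)\cap\big(\bigcup_{i\in\mathcal D_2}\varphi_i(F)\big)$ a singleton. *)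

(* Defs.v *)
From HB Require Import structures.
From mathcomp Require Import all_boot all_order all_algebra.
From mathcomp Require Import all_classical all_reals all_analysis.
Set Implicit Arguments. Unset Strict Implicit. Unset Printing Implicit Defensive.
Import Order.TTheory GRing.Theory Num.Theory.
Import numFieldNormedType.Exports.
Local Open Scope classical_set_scope.
Local Open Scope ring_scope.

Definition digit (N : nat) := ('I_N * 'I_N)%type.

Definition phi (R : realType) (N : nat) (i : digit N) (x : R * R) : R * R :=
  ((x.1 + (i.1 : nat)%:R) / N%:R, (x.2 + (i.2 : nat)%:R) / N%:R).

Definition union_cells (R : realType) (N : nat) (A : {set digit N})
  (F : set (R * R)) : set (R * R) :=
  \bigcup_(i in [set j | j \in A]) (@phi R N i @` F).

Definition is_attractor (R : realType) (N : nat) (D : {set digit N})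
  (F : set (R * R)) : Prop :=
  F !=set0 /\ compact F /\ F = union_cells D F.

Definition fragile (R : realType) (N : nat) (D : {set digit N})
  (F : set (R * R)) : Prop :=
  exists D1 D2 : {set digit N},
    finset.setI D1 D2 = finset.set0 /\ finset.setU D1 D2 = D /\ (0 < #|D1|)%N /\ (0 < #|D2|)%N /\
    exists x : R * R, union_cells D1 F `&` union_cells D2 F = [set x].

(* Main.v *)
Require Import Defs.
From HB Require Import structures.
From mathcomp Require Import all_boot all_order all_algebra.
From mathcomp Require Import all_classical all_reals all_analysis.
From mathcomp Require Import lra zify ring.
Import Order.TTheory GRing.Theory Num.Theory.
Import numFieldNormedType.Exports.
Local Open Scope classical_set_scope.
Local Open Scope ring_scope.
Set Implicit Arguments. Unset Strict Implicit.

Lemma pow_big (R : realType) (N : nat) (t M : R) :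
  (2 <= N)%N -> 0 < t -> exists n, M < (N%:R)^+n * t.
Proof.
move=> N2 t0.
have h0 : 0 <= `|M| / t by apply: divr_ge0 => //; exact: ltW.
set n := Num.Def.archi_bound (`|M| / t).
exists n.
have h1 := archi_boundP h0.
have h2 : (n < N ^ n)%N by apply: ltn_expl.
have h3 : n%:R < (N%:R : R) ^+ n by rewrite -natrX ltr_nat.
have h4 : `|M| < n%:R * t by rewrite -ltr_pdivrMr.
have h5 : n%:R * t < (N%:R : R) ^+ n * t by rewrite ltr_pM2r.
have h6 : M <= `|M| by apply: ler_norm.
lra.
Qed.

Lemma bound_compact (R : realType) (F : set (R * R)) :
  compact F -> exists M : R, forall x, F x -> `|x.1| <= M /\ `|x.2| <= M.
Proof.
move=> /compact_bounded [M [_ HM]].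
exists (M + 1) => x Fx.
have h : `|x| <= M + 1 by apply: (HM (M + 1)) => //; lra.
have h' : Num.max `|x.1| `|x.2| <= M + 1 := h.
by move: h'; rewrite ge_max => /andP.
Qed.

Lemma coordlem (R : realType) (N d d' i j : nat) (y y' : R) :
  (2 <= N)%N -> (d < N)%N -> (d' < N)%N -> (i < N)%N -> (j < N)%N ->
  0 <= y <= 1 -> 0 <= y' <= 1 ->
  ((y + d%:R)/N%:R + i%:R)/N%:R = ((y' + d'%:R)/N%:R + j%:R)/N%:R ->
  ((y + i%:R)/N%:R = (y' + j%:R)/N%:R \/ (i = j /\ (y = 0 \/ y = 1))) /\
  (i <> j -> y = 0 \/ y = 1).
Proof.
move=> N2 dN d'N iN jN /andP[y0 y1] /andP[y'0 y'1] E.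
have Nn0 : (N%:R : R) != 0 by rewrite pnatr_eq0; lia.
have E1 : y + (d + N * i)%:R = y' + (d' + N * j)%:R.
  rewrite !natrD !natrM.
  have := E; move/(congr1 (fun z => z * N%:R)); rewrite !mulfVK //.
  move/(congr1 (fun z => z * N%:R)); rewrite !mulrDl !mulfVK //.
  move=> h; lra.
set a := (d + N * i)%N in E1; set b := (d' + N * j)%N in E1.
have [hab|hab|hab] := ltngtP a b.
- have [hb|hb] : (b = a.+1 \/ a.+2 <= b)%N by lia.
  + have ey : y = y' + 1 by move: E1; rewrite hb -addn1 natrD; lra.
    have y1' : y = 1 by lra.
    have y'0' : y' = 0 by lra.
    split; last by move=> _; right.
    have [->|ij] := eqVneq i j; first by right; split => //; right.
    left; have -> : j = i.+1 by rewrite /a /b in hb; nia.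
    by rewrite y1' y'0' -addn1 natrD; congr (_ / _); lra.
  + have : (a + 2)%:R <= (b%:R : R) by rewrite ler_nat; lia.
    rewrite natrD; lra.
- have [hb|hb] : (a = b.+1 \/ b.+2 <= a)%N by lia.
  + have ey : y' = y + 1 by move: E1; rewrite hb -addn1 natrD; lra.
    have y1' : y = 0 by lra.
    have y'0' : y' = 1 by lra.
    split; last by move=> _; left.
    have [->|ij] := eqVneq i j; first by right; split => //; left.
    left; have -> : i = j.+1 by rewrite /a /b in hb; nia.
    by rewrite y1' y'0' -addn1 natrD; congr (_ / _); lra.
  + have : (b + 2)%:R <= (a%:R : R) by rewrite ler_nat; lia.
    rewrite natrD; lra.
- have eij : i = j by rewrite /a /b in hab; nia.
  have ey : y = y' by move: E1; rewrite hab; lra.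
  by split; [left; rewrite ey eij | ].
Qed.

Lemma nonpos_of_bound (R : realType) (N : nat) (t M : R) :
  (2 <= N)%N -> (forall n, (N%:R)^+n * t <= M) -> t <= 0.
Proof.
move=> N2 H; rewrite leNgt; apply/negP => t0.
have [n hn] := pow_big M N2 t0; have := H n; lra.
Qed.

Lemma step_coord (R : realType) (N d : nat) (p a b M : R) :
  (2 <= N)%N -> (d < N)%N -> 0 <= p -> a = (b + d%:R) / N%:R ->
  -M <= p * b -> p * (b - 1) <= M ->
  -M <= p * N%:R * a /\ p * N%:R * (a - 1) <= M.
Proof.
move=> N2 dN p0 Ha h1 h2.
have Nn0 : (N%:R : R) != 0 by rewrite pnatr_eq0; lia.
have e : p * N%:R * a = p * b + p * d%:R by rewrite Ha; field.
have pd : 0 <= p * d%:R by apply: mulr_ge0.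
have dN' : d%:R + 1 <= (N%:R : R) by rewrite natr1 ler_nat.
have pd2 : p * (d%:R + 1) <= p * N%:R by apply: ler_wpM2l.
split; first lra.
have -> : p * N%:R * (a - 1) = p * N%:R * a - p * N%:R by ring.
rewrite e; move: pd2; rewrite mulrDr mulr1; move: h2; rewrite mulrBr mulr1; lra.
Qed.

Lemma decomp (R : realType) (N : nat) (D : {set digit N}) (F : set (R * R)) x :
  is_attractor D F -> F x -> exists d y, [/\ d \in D, F y & x = phi d y].
Proof.
move=> [_ [_ HF]] Fx.
have : union_cells D F x by rewrite -HF.
by move=> [d /= dD [y Fy <-]]; exists d, y.
Qed.

Lemma phi_in (R : realType) (N : nat) (D : {set digit N}) (F : set (R * R)) d y :
  is_attractor D F -> d \in D -> F y -> F (phi d y).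
Proof.
move=> [_ [_ HF]] dD Fy; rewrite HF; exists d => //; by exists y.
Qed.

Lemma attr_inQ (R : realType) (N : nat) (D : {set digit N}) (F : set (R * R)) :
  (2 <= N)%N -> is_attractor D F ->
  forall x, F x -> (0 <= x.1 <= 1) /\ (0 <= x.2 <= 1).
Proof.
move=> N2 HA; have [_ [cF _]] := HA.
have [M HM] := bound_compact cF.
have key : forall n (x : R * R), F x ->
  [/\ -M <= (N%:R : R)^+n * x.1, (N%:R : R)^+n * (x.1 - 1) <= M,
     -M <= (N%:R : R)^+n * x.2 & (N%:R : R)^+n * (x.2 - 1) <= M].
  elim=> [|n IH] x Fx.
    rewrite expr0 !mul1r; have [h1 h2] := HM x Fx; move: h1 h2.
    rewrite !ler_norml => /andP[h1 h1'] /andP[h2 h2']; split; lra.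
  have [d [y [dD Fy ->]]] := decomp HA Fx.
  have [a1 a2 b1 b2] := IH y Fy.
  have p0 : 0 <= (N%:R : R) ^+ n by apply: exprn_ge0.
  rewrite exprSr.
  have [c1 c2] := @step_coord R N d.1 _ _ _ M N2 (ltn_ord _) p0 erefl a1 a2.
  have [c3 c4] := @step_coord R N d.2 _ _ _ M N2 (ltn_ord _) p0 erefl b1 b2.
  by split.
move=> x Fx.
have h1 : -x.1 <= 0 by apply: (@nonpos_of_bound R N _ M N2) => n;
  have [a _ _ _] := key n x Fx; lra.
have h2 : x.1 - 1 <= 0 by apply: (@nonpos_of_bound R N _ M N2) => n;
  have [_ a _ _] := key n x Fx; lra.
have h3 : -x.2 <= 0 by apply: (@nonpos_of_bound R N _ M N2) => n;
  have [_ _ a _] := key n x Fx; lra.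
have h4 : x.2 - 1 <= 0 by apply: (@nonpos_of_bound R N _ M N2) => n;
  have [_ _ _ a] := key n x Fx; lra.
split; apply/andP; split; lra.
Qed.

Lemma corner_fix (R : realType) (N e : nat) (y q : R) :
  (2 <= N)%N -> (e < N)%N -> 0 <= q <= 1 -> y = (q + e%:R) / N%:R ->
  (y = 0 \/ y = 1) -> (y + e%:R) / N%:R = y.
Proof.
move=> N2 eN /andP[q0 q1] Hy hy.
have Nn0 : (N%:R : R) != 0 by rewrite pnatr_eq0; lia.
have h : y * N%:R = q + e%:R by rewrite Hy mulfVK.
have dN' : e%:R + 1 <= (N%:R : R) by rewrite natr1 ler_nat.
have e0 : 0 <= (e%:R : R) by [].
have N2' : 2 <= (N%:R : R) by rewrite ler_nat.
case: hy => hy; rewrite hy in h *.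
  have -> : e%:R = 0 :> R by move: h; rewrite mul0r; lra.
  by rewrite add0r mul0r.
have -> : e%:R = N%:R - 1 :> R by move: h; rewrite mul1r; lra.
rewrite addrC subrK mulfV //.
Qed.

Lemma corner_uniq (R : realType) (N e : nat) (y y' q q' : R) :
  (2 <= N)%N -> (e < N)%N -> 0 <= q <= 1 -> 0 <= q' <= 1 ->
  y = (q + e%:R) / N%:R -> y' = (q' + e%:R) / N%:R ->
  (y = 0 \/ y = 1) -> (y' = 0 \/ y' = 1) -> y = y'.
Proof.
move=> N2 eN /andP[q0 q1] /andP[q'0 q'1] Hy Hy' hy hy'.
have Nn0 : (N%:R : R) != 0 by rewrite pnatr_eq0; lia.
have h : y * N%:R = q + e%:R by rewrite Hy mulfVK.
have h' : y' * N%:R = q' + e%:R by rewrite Hy' mulfVK.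
have dN' : e%:R + 1 <= (N%:R : R) by rewrite natr1 ler_nat.
have e0 : 0 <= (e%:R : R) by [].
have N2' : 2 <= (N%:R : R) by rewrite ler_nat.
case: hy => hy; case: hy' => hy'; rewrite hy hy' in h h' *;
  rewrite ?mul0r ?mul1r in h h'; lra.
Qed.

Lemma scale_step (R : realType) (N : nat) (k : R) n (a b : R) :
  (0 < N)%N ->
  (N%:R)^+n.+1 * `|(a + k) / N%:R - (b + k) / N%:R| = (N%:R)^+n * `|a - b|.
Proof.
move=> N0.
have Nn0 : (N%:R : R) != 0 by rewrite pnatr_eq0; lia.
have -> : (a + k) / N%:R - (b + k) / N%:R = (a - b) / N%:R by field.
rewrite normrM normfV (@ger0_norm _ N%:R) // exprSr; field.
exact: Nn0.
Qed.

Lemma digit_eq (N : nat) (i j : digit N) :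
  (i.1 : nat) = j.1 -> (i.2 : nat) = j.2 -> i = j.
Proof.
by case: i j => [a b] [c e] /= h1 h2; congr pair; apply: val_inj.
Qed.

Unset Implicit Arguments.

Theorem mainTheorem14 (R : realType) (N : nat) (D : {set digit N})
  (F : set (R * R)) (i : digit N) :
  (2 <= N)%N -> (1 < #|D|)%N -> (#|D| < N ^ 2)%N ->
  is_attractor D F ->
  connected F ->
  i \in D ->
  (exists w : digit N * digit N,
     [/\ w.1 \in D, w.2 \in D,
         (@phi R N i \o @phi R N w.1 \o @phi R N w.2) @` F
           `&` union_cells (D :\ i) F !=set0
       & forall w' : digit N * digit N,
           w'.1 \in D -> w'.2 \in D ->
           (@phi R N i \o @phi R N w'.1 \o @phi R N w'.2) @` F
             `&` union_cells (D :\ i) F !=set0 ->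
           w' = w]) ->
  fragile D F.
Proof.
move=> N2 D1 DN HA cF iD [w [w1D w2D [s0 [[q0 Fq0 Es0] Us0]] wU]].
set U := union_cells (D :\ i) F.
pose G := fun x => F x /\ U (phi i x).
have inQF := attr_inQ N2 HA.
have Claim1 : forall x d y e q, G x -> d \in D -> e \in D -> F q ->
    x = phi d y -> y = phi e q -> d = w.1 /\ e = w.2.
  move=> x d y e q [Fx Ux] dD eD Fq Ex Ey.
  suff h : (d, e) = w by rewrite -h.
  apply: wU => //=; exists (phi i x); split => //.
  by exists q => //=; rewrite Ex Ey.
have Claim2 : forall x d y, G x -> d \in D -> F y -> x = phi d y ->
    G y \/ ((y.1 = 0 \/ y.1 = 1) /\ (y.2 = 0 \/ y.2 = 1)).
  move=> x d y [Fx [j /= jDi [z Fz Ez]]] dD Fy Ex.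
  have [d' [y' [d'D Fy' Ez']]] := decomp HA Fz.
  have E : phi i (phi d y) = phi j (phi d' y') by rewrite -Ex -Ez'.
  have E1 := congr1 fst E; have E2 := congr1 snd E.
  rewrite /phi /= in E1 E2.
  have [Q1 Q2] := inQF y Fy; have [Q1' Q2'] := inQF y' Fy'.
  have [c1 c1'] := coordlem N2 (ltn_ord d.1) (ltn_ord d'.1) (ltn_ord i.1)
                     (ltn_ord j.1) Q1 Q1' E1.
  have [c2 c2'] := coordlem N2 (ltn_ord d.2) (ltn_ord d'.2) (ltn_ord i.2)
                     (ltn_ord j.2) Q2 Q2' E2.
  have jni : j != i by move: jDi => /=; rewrite in_setD1 => /andP[].
  case: c1 => [h1|[h1 y1c]]; case: c2 => [h2|[h2 y2c]].
  - left; split => //; exists j => //; exists y' => //.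
    by rewrite /phi -h1 -h2.
  - right; split => //; apply: c1' => h; move/eqP: jni; apply.
    exact: digit_eq.
  - right; split => //; apply: c2' => h; move/eqP: jni; apply.
    exact: digit_eq.
  - by move/eqP: jni; case; apply: digit_eq.
have G0 : G (phi w.1 (phi w.2 q0)).
  split; first by apply: (phi_in HA) => //; apply: (phi_in HA).
  by rewrite /U; move: Es0 => /= ->.
have uniqG : forall x x', G x -> G x' -> x = x'.
  case: (eqVneq w.1 w.2) => hw.
  - set c := w.1.
    have back : forall x, G x -> exists y, G y /\ x = phi c y.
      move=> x Gx.
      have [d [y [dD Fy Ex]]] := decomp HA Gx.1.
      have [e [q [eD Fq Ey]]] := decomp HA Fy.
      have [hd he] := Claim1 x d y e q Gx dD eD Fq Ex Ey.
      case: (Claim2 x d y Gx dD Fy Ex) => [Gy | [cy1 cy2]].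
        by exists y; rewrite Ex hd.
      have [Qq1 Qq2] := inQF q Fq.
      have fy : phi c y = y.
        have Ey1 := congr1 fst Ey; have Ey2 := congr1 snd Ey.
        rewrite /phi /= in Ey1 Ey2.
        rewrite /c hw -he /phi.
        rewrite (corner_fix N2 (ltn_ord e.1) Qq1 Ey1 cy1).
        rewrite (corner_fix N2 (ltn_ord e.2) Qq2 Ey2 cy2).
        by case: (y).
      have xy : x = y by rewrite Ex hd -/c fy.
      by exists x; split => //; rewrite {2}xy fy.
    have key : forall n x x', G x -> G x' ->
        (N%:R : R)^+n * `|x.1 - x'.1| <= 1 /\ (N%:R : R)^+n * `|x.2 - x'.2| <= 1.
      elim=> [|n IH] x x' Gx Gx'.
        have [/andP[a1 a2] /andP[b1 b2]] := inQF x Gx.1.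
        have [/andP[a1' a2'] /andP[b1' b2']] := inQF x' Gx'.1.
        rewrite expr0 !mul1r !ler_norml.
        split; apply/andP; split; lra.
      have [y [Gy ->]] := back x Gx.
      have [y' [Gy' ->]] := back x' Gx'.
      have N0 : (0 < N)%N by lia.
      rewrite /phi /= !scale_step //.
      exact: IH.
    move=> x x' Gx Gx'.
    have e1 : `|x.1 - x'.1| <= 0.
      apply: (@nonpos_of_bound R N _ 1 N2) => n; exact: (key n x x' Gx Gx').1.
    have e2 : `|x.2 - x'.2| <= 0.
      apply: (@nonpos_of_bound R N _ 1 N2) => n; exact: (key n x x' Gx Gx').2.
    have n1 := normr_ge0 (x.1 - x'.1); have n2 := normr_ge0 (x.2 - x'.2).
    have f1 : x.1 = x'.1.
      have : `|x.1 - x'.1| = 0 by lra.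
      by move/eqP; rewrite normr_eq0 subr_eq0 => /eqP.
    have f2 : x.2 = x'.2.
      have : `|x.2 - x'.2| = 0 by lra.
      by move/eqP; rewrite normr_eq0 subr_eq0 => /eqP.
    by move: f1 f2; case: (x) => ? ?; case: (x') => ? ? /= -> ->.
  - have shape : forall x, G x -> exists y q, [/\ F q, x = phi w.1 y,
        y = phi w.2 q & (y.1 = 0 \/ y.1 = 1) /\ (y.2 = 0 \/ y.2 = 1)].
      move=> x Gx.
      have [d [y [dD Fy Ex]]] := decomp HA Gx.1.
      have [e [q [eD Fq Ey]]] := decomp HA Fy.
      have [hd he] := Claim1 x d y e q Gx dD eD Fq Ex Ey.
      case: (Claim2 x d y Gx dD Fy Ex) => [Gy | cy].
        have [d2 [y2 [d2D Fy2 Ey2]]] := decomp HA Fy.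
        have [e2 [q2 [e2D Fq2 Ey2']]] := decomp HA Fy2.
        have [hd2 _] := Claim1 y d2 y2 e2 q2 Gy d2D e2D Fq2 Ey2 Ey2'.
        have [_ he2] := Claim1 x d y d2 y2 Gx dD d2D Fy2 Ex Ey2.
        by move/eqP: hw; rewrite -he2 hd2.
      by exists y, q; rewrite -hd -he.
    move=> x x' Gx Gx'.
    have [y [q [Fq -> Ey cy]]] := shape x Gx.
    have [y' [q' [Fq' -> Ey' cy']]] := shape x' Gx'.
    have [Qq1 Qq2] := inQF q Fq; have [Qq1' Qq2'] := inQF q' Fq'.
    have Ey1 := congr1 fst Ey; have Ey2 := congr1 snd Ey.
    have Ey1' := congr1 fst Ey'; have Ey2' := congr1 snd Ey'.
    rewrite /phi /= in Ey1 Ey2 Ey1' Ey2'.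
    have u1 := corner_uniq N2 (ltn_ord w.2.1) Qq1 Qq1' Ey1 Ey1' cy.1 cy'.1.
    have u2 := corner_uniq N2 (ltn_ord w.2.2) Qq2 Qq2' Ey2 Ey2' cy.2 cy'.2.
    have -> : y = y' by move: u1 u2; case: (y) => ? ?; case: (y') => ? ? /= -> ->.
    by [].
exists [set i]%SET, (D :\ i).
split; first by apply/setP => z; rewrite !inE; case: (z == i).
split; first exact: finset.setD1K iD.
split; first by rewrite cards1.
split; first by move: D1; rewrite (cardsD1 i D) iD /= add1n ltnS.
exists (phi i (phi w.1 (phi w.2 q0))).
apply/seteqP; split.
- move=> s [[j /= ji [x Fx <-]] Us].
  move: ji Us; rewrite inE => /eqP -> Us.
  have Gx : G x by exact: (conj Fx Us).
  by rewrite /= (uniqG x _ Gx G0).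
- move=> s /= ->; split; last exact: G0.2.
  exists i; first by rewrite /= inE.
  by exists (phi w.1 (phi w.2 q0)) => //; exact: G0.1.
Qed.
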